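(* Let $\bm{H}_1,\dots,\bm{H}_N$ be random matrices with values in $\mathbb{C}^{N_R\times N_T}$ (sub-channels of a frequency-selective MIMO channel), let $W,\rho>0$, and let $c=\frac{W}{N}\sum_{j=1}^N\log_2\det(\bm{I}_{N_R}+\frac{\rho}{N_T}\bm{H}_j\bm{H}_j^\ast)$ be the capacity when channel side information is known only at the receiver. If for every $j\in\{1,\dots,N\}$ there is $\theta>0$ with $\mathbb{E}\big[\prod_{i=1}^{r(\bm{H}_j)}(1+\lambda_i^j)^\theta\big]<\infty$, where $r(\bm{H}_j)$ is the rank of $\bm{H}_j$ and $\lambda_i^j$ are the (positive) eigenvalues of $\bm{H}_j\bm{H}_j^\ast$, then the distribution of $c$ is light-tailed.
   Context: A nonnegative random variable $X$ is light-tailed if $\Pr(X>x)=O(e^{-\theta x})$ for some $\theta>0$, equivalently $\mathbb{E}[e^{\theta X}]<\infty$ for some $\theta>0$. *)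

(* Defs.v *)
From HB Require Import structures.
From mathcomp Require Import all_boot all_order all_algebra.
From mathcomp Require Import all_classical all_reals all_analysis.
From mathcomp Require Import complex.
Set Implicit Arguments. Unset Strict Implicit. Unset Printing Implicit Defensive.
Import Order.TTheory GRing.Theory Num.Theory.
Local Open Scope ring_scope.
Local Open Scope classical_set_scope.

Definition ctrmx (R : rcfType) (m n : nat) (A : 'M[R[i]]_(m, n)) : 'M[R[i]]_(n, m) :=
  (map_mx (@conjc R) A)^T.

Lemma char_poly_splits (F : closedFieldType) (n : nat) (A : 'M[F]_n) :
  exists s : seq F, char_poly A == \prod_(z <- s) ('X - z%:P).
Proof.
have [s Hs] := closed_field_poly_normal (char_poly A).
exists s; rewrite {1}Hs.
by rewrite (eqP (char_poly_monic A)) scale1r.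
Qed.

Definition eigenvalues (F : closedFieldType) (n : nat) (A : 'M[F]_n) : seq F :=
  xchoose (char_poly_splits A).

(* prod_{i=1}^{r(H)} (1 + lambda_i)^theta, lambda_i ranging over the positive
   eigenvalues (with multiplicity) of H H^* *)
Definition pos_eig_prod (R : realType) (m n : nat) (H : 'M[R[i]]_(m, n)) (theta : R) : R :=
  \prod_(l <- eigenvalues (H *m ctrmx H) | 0 < l) powR (1 + complex.Re l) theta.

Definition log2 (R : realType) (x : R) : R := ln x / ln 2.

(* c = W/N sum_j log2 det(I + rho/N_T H_j H_j^* ) (the determinant is a positive real) *)
Definition capacity (R : realType) (NR NT N : nat) (W rho : R)
    (H : 'I_N -> 'M[R[i]]_(NR, NT)) : R :=
  W / N%:R * \sum_(j < N)
     log2 (complex.Re (\det (1%:M + real_complex R (rho / NT%:R) *: (H j *m ctrmx (H j))))).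

Definition random_cmatrix (d : measure_display) (T : measurableType d) (R : realType)
    (m n : nat) (H : T -> 'M[R[i]]_(m, n)) : Prop :=
  forall (a : 'I_m) (b : 'I_n),
    measurable_fun setT (fun w => complex.Re (H w a b)) /\
    measurable_fun setT (fun w => complex.Im (H w a b)).

Definition light_tailed (d : measure_display) (T : measurableType d) (R : realType)
    (P : probability T R) (X : T -> R) : Prop :=
  exists theta : R, 0 < theta /\
    exists K x0 : R, forall x : R, x0 <= x ->
      (P [set w | (x < X w)%R] <= (K * expR (- (theta * x)))%:E)%E.

(* Main.v *)
Set Warnings "-all".
Require Import Defs.
From HB Require Import structures.
From mathcomp Require Import all_boot all_order all_algebra.
From mathcomp Require Import all_classical all_reals all_analysis.
From mathcomp Require Import complex.
From mathcomp Require Import ring lra.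
Import Order.TTheory GRing.Theory Num.Theory.
Local Open Scope ring_scope.

Lemma prod_scale (F : comPzRingType) (s : seq F) (c : F) (f : F -> F) :
  c ^+ size s * \prod_(z <- s) f z = \prod_(z <- s) (c * f z).
Proof.
elim: s => [|z s IH] /=; first by rewrite !big_nil expr0 mulr1.
by rewrite !big_cons /= exprS -IH mulrACA.
Qed.

Lemma char_poly_horner (F : fieldType) n (M : 'M[F]_n) (x : F) :
  (char_poly M).[x] = \det (x%:M - M).
Proof.
rewrite /char_poly -horner_evalE -(det_map_mx (horner_eval x)).
apply: f_equal; apply/matrixP => i j; rewrite !mxE /= horner_evalE.
by rewrite hornerD hornerN hornerMn hornerX hornerC.
Qed.

Lemma det_IZ (F : fieldType) n (M : 'M[F]_n) (s : seq F) (a : F) :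
  char_poly M = \prod_(z <- s) ('X - z%:P) -> a != 0 ->
  \det (1%:M + a *: M) = \prod_(z <- s) (1 + a * z).
Proof.
move=> hs a0.
have sz : size s = n.
  by have := size_char_poly M; rewrite hs size_prod_XsubC => -[].
have -> : 1%:M + a *: M = (- a) *: ((- a^-1)%:M - M).
  by rewrite scalerBr -[(- a^-1)%:M]scalemx1 scalerA mulrNN divff // scale1r scaleNr opprK.
rewrite detZ -char_poly_horner hs horner_prod -sz prod_scale.
apply: eq_bigr => z _; rewrite hornerXsubC.
by rewrite mulrBr mulrNN divff // mulNr opprK.
Qed.

Lemma eig_ge0 (R : rcfType) m n (H : 'M[R[i]]_(m, n)) (z : R[i]) :
  root (char_poly (H *m ctrmx H)) z -> 0 <= z.
Proof.
rewrite -eigenvalue_root_char => /eigenvalueP [v hv vn0].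
set w := v *m H.
have key : w *m ctrmx w = z *: (v *m ctrmx v).
  rewrite /w {1}/ctrmx map_mxM trmx_mul mulmxA -[v *m H *m _]mulmxA.
  by rewrite hv -scalemxAl.
move/matrixP: key => /(_ 0 0); rewrite !mxE.
under eq_bigr do rewrite !mxE.
under [in X in _ = _ * X]eq_bigr do rewrite !mxE.
set a := (X in X = _); set b := (X in _ = _ * X) => eab.
have a0 : 0 <= a by apply: sumr_ge0 => k _; exact: mulcJ_ge0.
have b0 : 0 < b.
  rewrite lt_def sumr_ge0 ?andbT; last by move=> k _; exact: mulcJ_ge0.
  apply/negP => /eqP /psumr_eq0P hb; apply/negP: vn0; rewrite negbK.
  apply/eqP/matrixP => i k; rewrite mxE (ord1 i).
  have /eqP := hb (fun _ _ => mulcJ_ge0 _) k isT.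
  by rewrite mulf_eq0 conjc_eq0 orbb => /eqP.
have -> : z = a / b by rewrite eab mulfK // gt_eqF.
by rewrite divr_ge0 // ltW.
Qed.

Lemma prod_ge1 (R : realType) (r : seq R) (P : pred R) (f : R -> R) :
  (forall x, x \in r -> 1 <= f x) -> 1 <= \prod_(x <- r | P x) f x.
Proof.
elim: r => [|x r IH] h; first by rewrite big_nil.
have hr : forall y, y \in r -> 1 <= f y by move=> y yr; apply: h; rewrite inE yr orbT.
move: (IH hr) => {}IH.
rewrite big_cons; case: ifP => _ //.
by rewrite -[X in X <= _](mulr1 1) ler_pM // h // inE eqxx.
Qed.

Lemma prod_bound (R : realType) (r : seq R) (c : R) : 0 < c ->
  (forall x, x \in r -> 0 <= x) ->
  \prod_(x <- r) (1 + c * x) <= (Num.max 1 c) ^+ size r * \prod_(x <- r | 0 < x) (1 + x).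
Proof.
move=> c0; elim: r => [|x r IH] h; first by rewrite !big_nil expr0 mulr1.
have x0 : 0 <= x by apply: h; rewrite inE eqxx.
have hr : forall y, y \in r -> 0 <= y by move=> y yr; apply: h; rewrite inE yr orbT.
move: (IH hr) => {}IH.
have K1 : 1 <= Num.max 1 c by rewrite le_max lexx.
have Kc : c <= Num.max 1 c by rewrite le_max lexx orbT.
rewrite !big_cons /= exprS.
have P0 : 0 <= \prod_(y <- r) (1 + c * y).
  apply: (le_trans ler01); apply: prod_ge1 => y yr.
  by rewrite lerDl; apply: mulr_ge0; [exact: ltW | exact: hr].
case: ifP => xp.
- rewrite mulrACA; apply: ler_pM => //; first by rewrite addr_ge0 // mulr_ge0 // ltW.
  rewrite mulrDr mulr1; apply: lerD => //; apply: ler_wpM2r => //.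
- have -> : x = 0 by apply/eqP; rewrite eq_le x0 andbT leNgt xp.
  rewrite mulr0 addr0 mul1r -mulrA.
  have IH2 := le_trans P0 IH.
  apply: (le_trans IH); rewrite ler_peMl //.
Qed.

Lemma prod_powR (R : realType) (r : seq R) (P : pred R) (f : R -> R) (t : R) :
  (forall x, x \in r -> 0 <= f x) ->
  \prod_(x <- r | P x) (f x) `^ t = (\prod_(x <- r | P x) f x) `^ t.
Proof.
elim: r => [|x r IH] h; first by rewrite !big_nil powR1.
have hr : forall y, y \in r -> 0 <= f y by move=> y yr; apply: h; rewrite inE yr orbT.
move: (IH hr) => {}IH; rewrite !big_cons.
case: ifP => _ //; rewrite IH powRM //; first by apply: h; rewrite inE eqxx.
rewrite big_seq_cond; apply: prodr_ge0 => y /andP[yr _]; exact: hr.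
Qed.

Lemma cap_facts (R : realType) m n (H : 'M[R[i]]_(m, n)) (c th : R) : 0 < c ->
  [/\ 1 <= complex.Re (\det (1%:M + real_complex R c *: (H *m ctrmx H))),
      complex.Re (\det (1%:M + real_complex R c *: (H *m ctrmx H))) <=
        (Num.max 1 c) ^+ m * \prod_(l <- eigenvalues (H *m ctrmx H) | 0 < l) (1 + complex.Re l),
      1 <= \prod_(l <- eigenvalues (H *m ctrmx H) | 0 < l) (1 + complex.Re l) &
      pos_eig_prod H th = (\prod_(l <- eigenvalues (H *m ctrmx H) | 0 < l) (1 + complex.Re l)) `^ th].
Proof.
move=> c0; rewrite /pos_eig_prod.
set M := H *m ctrmx H.
have hs : char_poly M = \prod_(z <- eigenvalues M) ('X - z%:P).
  by rewrite /eigenvalues; exact/eqP/(xchooseP (char_poly_splits M)).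
move: hs; set s := eigenvalues M => hs.
have hre : forall z, z \in s -> 0 <= z.
  by move=> z zs; apply: (@eig_ge0 _ _ _ H); move: hs; rewrite /M => ->; rewrite root_prod_XsubC.
set r := map (@complex.Re R) s.
have es : s = map (real_complex R) r.
  rewrite /r -map_comp; apply/esym/map_id_in => z /hre.
  by case: z => a b; rewrite lecE /= => /andP[/eqP -> _].
have r0 : forall x, x \in r -> 0 <= x.
  move=> x /mapP[z /hre zs ->]; move: zs.
  by case: z => a b; rewrite lecE /= => /andP[_ ->].
have sz : size r = m.
  by have := congr1 (fun p : {poly R[i]} => size p) hs; rewrite size_prod_XsubC size_char_poly size_map => -[].
have eD : complex.Re (\det (1%:M + real_complex R c *: M)) = \prod_(x <- r) (1 + c * x).
  rewrite (@det_IZ (R[i]) _ M s _ hs); last by rewrite eq_complex /= negb_and gt_eqF.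
  rewrite es big_map.
  have -> : \prod_(x <- r) (1 + real_complex R c * real_complex R x) =
      real_complex R (\prod_(x <- r) (1 + c * x)).
    by rewrite rmorph_prod; apply: eq_bigr => x _; rewrite rmorphD rmorph1 rmorphM.
  by [].
have eQ : forall f : R -> R, \prod_(l <- s | 0 < l) f (complex.Re l) = \prod_(x <- r | 0 < x) f x.
  move=> f; rewrite es big_map; apply: eq_big => x //=.
  by rewrite ltcE /= eqxx.
rewrite eD (eQ (fun x => 1 + x)) (eQ (fun x => (1 + x) `^ th)).
split.
- apply: prod_ge1 => x xr; rewrite lerDl; apply: mulr_ge0; [exact: ltW | exact: r0].
- by rewrite -sz; apply: prod_bound.
- by apply: prod_ge1 => x xr; rewrite lerDl r0.
- by apply: prod_powR => x xr; rewrite addr_ge0 // r0.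
Qed.
Import measurable_realfun.
Section cmeas.
Context (d : measure_display) (T : measurableType d) (R : realType).

Definition cmeas (f : T -> R[i]) :=
  measurable_fun setT (fun w => complex.Re (f w)) /\
  measurable_fun setT (fun w => complex.Im (f w)).

Lemma cmeas_cst (a : R[i]) : cmeas (fun _ => a).
Proof. by split; exact: measurable_cst. Qed.

Lemma cmeas_add f g : cmeas f -> cmeas g -> cmeas (fun w => f w + g w).
Proof.
move=> [f1 f2] [g1 g2]; split.
- have -> : (fun w => complex.Re (f w + g w)) = (fun w => complex.Re (f w) + complex.Re (g w)).
    by apply: funext => w; case: (f w) => ? ?; case: (g w) => ? ?.
  exact: measurable_funD.
- have -> : (fun w => complex.Im (f w + g w)) = (fun w => complex.Im (f w) + complex.Im (g w)).
    by apply: funext => w; case: (f w) => ? ?; case: (g w) => ? ?.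
  exact: measurable_funD.
Qed.

Lemma cmeas_mul f g : cmeas f -> cmeas g -> cmeas (fun w => f w * g w).
Proof.
move=> [f1 f2] [g1 g2]; split.
- have -> : (fun w => complex.Re (f w * g w)) =
     (fun w => complex.Re (f w) * complex.Re (g w) - complex.Im (f w) * complex.Im (g w)).
    by apply: funext => w; case: (f w) => ? ?; case: (g w) => ? ?.
  by apply: measurable_funB; apply: measurable_funM.
- have -> : (fun w => complex.Im (f w * g w)) =
     (fun w => complex.Re (f w) * complex.Im (g w) + complex.Im (f w) * complex.Re (g w)).
    by apply: funext => w; case: (f w) => ? ?; case: (g w) => ? ?.
  by apply: measurable_funD; apply: measurable_funM.
Qed.

Lemma cmeas_conj f : cmeas f -> cmeas (fun w => conjc (f w)).
Proof.
move=> [f1 f2]; split.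
- have -> : (fun w => complex.Re (conjc (f w))) = (fun w => complex.Re (f w)).
    by apply: funext => w; case: (f w) => ? ?.
  exact: f1.
- have -> : (fun w => complex.Im (conjc (f w))) = (fun w => - complex.Im (f w)).
    by apply: funext => w; case: (f w) => ? ?.
  exact: measurableT_comp f2.
Qed.

Lemma cmeas_sum (I : Type) (r : seq I) (P : pred I) (F : I -> T -> R[i]) :
  (forall i, cmeas (F i)) -> cmeas (fun w => \sum_(i <- r | P i) F i w).
Proof.
move=> hF; elim: r => [|i r IH].
  by under eq_fun do rewrite big_nil; exact: cmeas_cst.
under eq_fun do rewrite big_cons; case: (P i) => //.
exact: cmeas_add.
Qed.

Lemma cmeas_prod (I : Type) (r : seq I) (P : pred I) (F : I -> T -> R[i]) :
  (forall i, cmeas (F i)) -> cmeas (fun w => \prod_(i <- r | P i) F i w).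
Proof.
move=> hF; elim: r => [|i r IH].
  by under eq_fun do rewrite big_nil; exact: cmeas_cst.
under eq_fun do rewrite big_cons; case: (P i) => //.
exact: cmeas_mul.
Qed.

Lemma cmeas_det n (A : T -> 'M[R[i]]_n) :
  (forall i j, cmeas (fun w => A w i j)) -> cmeas (fun w => \det (A w)).
Proof.
move=> hA; rewrite /determinant; apply: cmeas_sum => s.
apply: cmeas_mul; first exact: cmeas_cst.
by apply: cmeas_prod => i; exact: hA.
Qed.

Lemma cmeas_capmx m n (H : T -> 'M[R[i]]_(m, n)) (a : R[i]) :
  random_cmatrix H ->
  forall i j, cmeas (fun w => (1%:M + a *: (H w *m ctrmx (H w))) i j).
Proof.
move=> hH i j.
under eq_fun do rewrite !mxE.
apply: cmeas_add; first exact: cmeas_cst.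
apply: cmeas_mul; first exact: cmeas_cst.
apply: cmeas_sum => k; apply: cmeas_mul; first exact: hH.
under eq_fun do rewrite !mxE.
by apply: cmeas_conj; exact: hH.
Qed.

End cmeas.

Section prob.
Local Open Scope ereal_scope.
Lemma markov_nm (d : measure_display) (T : measurableType d) (R : realType)
  (P : probability T R) (f : T -> R) (A : set T) (t : R) :
  measurable A -> (0 <= t)%R -> (forall w, 0 <= f w)%R -> (forall w, A w -> t <= f w)%R ->
  t%:E * P A <= \int[P]_w (f w)%:E.
Proof.
move=> mA t0 f0 hA.
rewrite ge0_integralTE; last by move=> w; rewrite lee_fin.
apply: ereal_sup_ubound => /=.
exists (scale_nnsfun (indic_nnsfun R mA) t0).
  move=> w /=; rewrite lee_fin measurable_realfun.mindicE; case: (boolP (w \in A)) => wA.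
    by rewrite mulr1; apply: hA; move: wA; rewrite inE.
  by rewrite mulr0.
by rewrite /= sintegralrM; congr (_ * _); exact: sintegral_indic.
Qed.
Lemma tail_gen (d : measure_display) (T : measurableType d) (R : realType)
  (P : probability T R) (D Q : T -> R) (K0 th : R) :
  measurable_fun setT D -> (1 <= K0)%R -> (0 < th)%R -> (forall w, 1 <= D w)%R ->
  (forall w, 1 <= Q w)%R -> (forall w, D w <= K0 * Q w)%R ->
  \int[P]_w ((Q w) `^ th)%:E < +oo ->
  forall y : R, P [set w | (y < ln (D w))%R]%classic <=
    (fine (\int[P]_w ((Q w) `^ th)%:E) * expR (th * ln K0) * expR (- (th * y)))%:E.
Proof.
move=> mD K1 th0 D1 Q1 DQ Ifin y.
set I := integral P setT _.
have I0 : 0 <= I by apply: integral_ge0 => w _; rewrite lee_fin powR_ge0.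
have Ifn : I \is a fin_num by rewrite ge0_fin_numE.
set A := [set w | (y < ln (D w))%R]%classic.
have mA : measurable A.
  have mlnD : measurable_fun setT (fun w => ln (D w)) := measurableT_comp (@measurable_ln R) mD.
  have := mlnD measurableT _ (measurable_itv `]y, +oo[); rewrite setTI.
  suff -> : A = ((fun w => ln (D w)) @^-1` `]y, +oo[)%classic by [].
  by apply/seteqP; split => w /=; rewrite in_itv /= andbT.
set t := expR (th * (y - ln K0)).
have t0 : (0 < t)%R by apply: expR_gt0.
have hA : forall w, A w -> (t <= (Q w) `^ th)%R.
  move=> w Aw.
  have Q0 : (0 < Q w)%R by apply: lt_le_trans (Q1 w).
  have K0p : (0 < K0)%R by apply: lt_le_trans K1.
  have -> : ((Q w) `^ th = expR (th * ln (Q w)))%R.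
    by rewrite -ln_powR lnK // posrE powR_gt0.
  rewrite ler_expR ler_pM2l //.
  have : (ln (D w) <= ln K0 + ln (Q w))%R.
    rewrite -lnM ?posrE // ler_ln ?posrE ?mulr_gt0 //.
    exact: lt_le_trans (D1 w).
  move: Aw; rewrite /A /=; lra.
have mk := @markov_nm _ _ _ P _ _ _ mA (ltW t0) (fun w => powR_ge0 _ _) hA.
have -> : P A = (t^-1)%:E * (t%:E * P A).
  by rewrite muleA -EFinM mulVf ?gt_eqF // mul1e.
rewrite -/I -(fineK Ifn) in mk.
apply: le_trans (lee_wpmul2l _ mk) _; first by rewrite lee_fin invr_ge0 ltW.
rewrite -EFinM lee_fin mulrC -mulrA ler_wpM2l //; first by rewrite -(fineK Ifn) in I0; rewrite -lee_fin.
rewrite /t -expRN -expRD ler_expR; lra.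
Qed.
End prob.

Lemma meas_lt (d : measure_display) (T : measurableType d) (R : realType)
  (f : T -> R) (y : R) : measurable_fun setT f -> measurable [set w | y < f w]%classic.
Proof.
move=> mf; have := mf measurableT _ (measurable_itv `]y, +oo[); rewrite setTI.
suff -> : [set w | y < f w]%classic = (f @^-1` `]y, +oo[)%classic by [].
by apply/seteqP; split => w /=; rewrite in_itv /= andbT.
Qed.

Theorem theorem4 (d : measure_display) (T : measurableType d) (R : realType)
    (P : probability T R) (NR NT N : nat) (W rho : R)
    (H : 'I_N -> T -> 'M[R[i]]_(NR, NT)) :
  (0 < NR)%N -> (0 < NT)%N -> (0 < N)%N -> 0 < W -> 0 < rho ->
  (forall j : 'I_N, random_cmatrix (H j)) ->
  (forall j : 'I_N, exists theta : R, 0 < theta /\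
     (\int[P]_w (pos_eig_prod (H j w) theta)%:E < +oo)%E) ->
  light_tailed P (fun w => capacity W rho (fun j => H j w)).
Proof.
move=> NR0 NT0 N0 W0 rho0 hH hint.
have [th hth] := choice hint.
set c := rho / NT%:R.
have c0 : 0 < c by rewrite divr_gt0 // ltr0n.
set K0 := Num.max 1 c ^+ NR.
have K1 : 1 <= K0 by rewrite exprn_ege1 // le_max lexx.
pose D j w := complex.Re (\det (1%:M + real_complex R c *: (H j w *m ctrmx (H j w)))).
pose Q j w := \prod_(l <- eigenvalues (H j w *m ctrmx (H j w)) | 0 < l) (1 + complex.Re l).
have mD : forall j, measurable_fun setT (D j).
  move=> j; have := @cmeas_det _ _ _ _ _ (@cmeas_capmx _ _ _ _ _ (H j) (real_complex R c) (hH j)).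
  by case.
pose I j := (\int[P]_w (pos_eig_prod (H j w) (th j))%:E)%E.
pose M j := fine (I j) * expR (th j * ln K0).
have M0 : forall j, 0 <= M j.
  move=> j; rewrite mulr_ge0 ?expR_ge0 // fine_ge0 // integral_ge0 // => w _.
  rewrite lee_fin /pos_eig_prod; apply: prodr_ge0 => l _; exact: powR_ge0.
have tail : forall j (y : R), (P [set w | (y < ln (D j w))%R]%classic <= (M j * expR (- (th j * y)))%:E)%E.
  move=> j y.
  have cf := fun w => @cap_facts _ _ _ (H j w) c (th j) c0.
  have D1 : forall w, 1 <= D j w by move=> w; case: (cf w).
  have DQ : forall w, D j w <= K0 * Q j w by move=> w; case: (cf w).
  have Q1 : forall w, 1 <= Q j w by move=> w; case: (cf w).
  have eI : I j = (\int[P]_w ((Q j w) `^ th j)%:E)%E.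
    by apply: eq_integral => w _; case: (cf w) => _ _ _ ->.
  have Ifin : (\int[P]_w ((Q j w) `^ th j)%:E < +oo)%E by rewrite -eI; exact: (hth j).2.
  have := @tail_gen _ _ _ P (D j) (Q j) K0 (th j) (mD j) K1 (hth j).1 D1 Q1 DQ Ifin y.
  by rewrite -eI.
have ln2 : 0 < ln (2 : R) by apply: ln_gt0; lra.
pose b j := th j * ln 2 / W.
have b0 : forall j, 0 < b j by move=> j; rewrite /b divr_gt0 // mulr_gt0 // (hth j).1.
pose j0 : 'I_N := Ordinal N0.
pose S := \sum_j (b j)^-1.
have bS : forall j, (b j)^-1 <= S.
  move=> j; rewrite /S (bigD1 j) //= lerDl sumr_ge0 // => k _.
  by rewrite invr_ge0 ltW.
have S0 : 0 < S by apply: lt_le_trans (bS j0); rewrite invr_gt0.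
pose be := S^-1.
have beb : forall j, be <= b j.
  by move=> j; rewrite /be -[b j]invrK lef_pV2 ?posrE ?invr_gt0.
exists be; split; first by rewrite invr_gt0.
exists (\sum_j M j), 0 => x x0.
have mcap : measurable_fun setT (fun w => capacity W rho (fun j => H j w)).
  rewrite /capacity /log2.
  apply: measurable_funM; first exact: measurable_cst.
  apply: measurable_sum => j; apply: measurable_funM; last exact: measurable_cst.
  exact: measurableT_comp (@measurable_ln R) (mD j).
pose A j := [set w | (x * ln 2 / W < ln (D j w))%R]%classic.
have mA : forall j, measurable (A j).
  by move=> j; apply: meas_lt; exact: measurableT_comp (@measurable_ln R) (mD j).
have hcov : ([set w | x < capacity W rho (fun j => H j w)] `<=`
    \big[setU/set0]_(k < N) A (insubd j0 k))%classic.
  move=> w /= hx; rewrite -(bigcup_mkord N (fun k => A (insubd j0 k))).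
  have [j hj] : exists j : 'I_N, x * ln 2 / W < ln (D j w).
    apply: contrapT => hn.
    have hle : forall j, ln (D j w) / ln 2 <= x / W.
      move=> j; rewrite ler_pdivrMr // mulrAC leNgt; apply/negP => hj; apply: hn; by exists j.
    move: hx; apply/negP; rewrite -leNgt /capacity.
    apply: (@le_trans _ _ (W / N%:R * \sum_(j < N) (x / W))).
      apply: ler_wpM2l; first by rewrite divr_ge0 // ltW.
      apply: ler_sum => j _; exact: hle.
    rewrite sumr_const card_ord -[x / W *+ N]mulr_natr.
    have NN : (N%:R : R) != 0 by rewrite pnatr_eq0 -lt0n.
    have -> : W / N%:R * (x / W * N%:R) = x by field; rewrite NN gt_eqF.
    by [].
  exists (val j); first exact: ltn_ord.
  by rewrite /A /= valKd.
have := @content_subadditive _ _ _ P _ (fun k => A (insubd j0 k)) N (fun k _ => mA _) (@meas_lt _ _ _ _ x mcap) hcov.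
move/le_trans; apply.
under eq_bigr do rewrite valKd.
rewrite (_ : (\sum_i P (A i))%R = (\sum_i P (A i))%E) //.
apply: (@le_trans _ _ (\sum_j (M j * expR (- (th j * (x * ln 2 / W))))%:E)%E).
  by apply: lee_sum => j _; exact: tail.
rewrite sumEFin lee_fin mulr_suml; apply: ler_sum => j _.
apply: ler_wpM2l; first exact: M0.
rewrite ler_expR lerN2.
have -> : th j * (x * ln 2 / W) = b j * x by rewrite /b; field; rewrite gt_eqF.
by rewrite ler_wpM2r.
Qed.
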